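(* Let $\mathcal{C}l(E)$ be a general Clifford algebra on $E=\{1,\dots,p\}$ and $n\ge1$. For $\mathcal{C}l(E)$-symmetric matrices $\mathcal M$ with the diffusion operator $\mathrm L_{\mathbb E,\mathcal Cl}$, let $P(X)=\det(\mathcal M-X\,\mathrm{Id})$ and $U(X)=(\mathcal M-X\,\mathrm{Id})^{-1}$. Then $U(X)$ is again $\mathcal{C}l(E)$-symmetric, i.e. its blocks are $U(X)^{A,B}=(A\Delta B|B)U(X)^{A\Delta B}$ for matrices $U(X)^C:=U(X)^{C,\emptyset}$, and $$\Gamma_{\mathbb E,\mathcal Cl}(P(X),P(Y))=\frac{2^p}{Y-X}\big(P'(X)P(Y)-P'(Y)P(X)\big),$$ $$\frac{\mathrm L_{\mathbb E,\mathcal Cl}(P)}{P}=\Gamma_{\mathbb E,\mathcal Cl}(\log P(X),\log P(X))-\frac12\Big(\sum_{A\subset E}(A|A)\Big)\mathrm{trace}\big(U(X)^2\big)-2^{p-1}\sum_{C\subset E}(C|C)H(C)\big(\mathrm{trace}\,U(X)^C\big)^2,$$ where $H(C)=\sum_{A\subset E}(A|C)(C|A)$. Moreover $\mathrm{trace}(U(X)^2)=\frac{P'^2}{P^2}-\frac{P''}{P}$.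
   Context: General Clifford algebra: real algebra with basis $(\omega_A)_{A\subset E}$, $\omega_\emptyset$ the unit, product $\omega_A\omega_B=(A|B)\,\omega_{A\Delta B}$ ($A\Delta B$ the symmetric difference), where $(A|B)=\prod_{i\in A,j\in B}(i|j)$, with $(i|j)=1$ for $i<j$ and arbitrary fixed signs $(j|i)\in\{\pm1\}$ ($i<j$), $(i|i)\in\{\pm1\}$. $\mathcal Cl(E)$-symmetric matrix: given real $n\times n$ matrices $M^C$, $C\subset E$, with $(M^C)^T=(C|C)M^C$, $\mathcal M$ is the real $(n2^p)\times(n2^p)$ block matrix with blocks indexed by pairs $(A,B)$ of subsets of $E$, block $\mathcal M^{A,B}=(A\Delta B|B)M^{A\Delta B}$. $\mathrm L_{\mathbb E,\mathcal Cl}$ is the diffusion operator in the coordinates $M^C_{ij}$ determined by $\mathrm L(M^C_{ij})=0$, $\Gamma(M^A_{ij},M^B_{kl})=\tfrac12\delta_{A,B}(\delta_{ik}\delta_{jl}+(A|A)\delta_{il}\delta_{jk})$, via the chain rule $\mathrm L(\Phi(f))=\sum_i\partial_i\Phi\,\mathrm Lf_i+\sum_{ij}\partial^2_{ij}\Phi\,\Gamma(f_i,f_j)$, $\Gamma(f,g)=\tfrac12(\mathrm L(fg)-f\mathrm Lg-g\mathrm Lf)$. Primes denote derivatives in $X$. *)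

(* Defs.v *)
From HB Require Import structures.
From mathcomp Require Import all_boot all_order all_algebra.
Set Implicit Arguments. Unset Strict Implicit. Unset Printing Implicit Defensive.
Import Order.TTheory GRing.Theory Num.Theory.
Local Open Scope ring_scope.

(* E = {1,...,p} is modelled by 'I_p with its natural order.
   The signs (i|j) are encoded by s : 'I_p -> 'I_p -> bool via
   (i|j) = (-1)^(s i j); the Clifford condition (i|j) = 1 for i < j is the
   hypothesis [forall i j, i < j -> s i j = false] of the theorem. *)

Definition symdiff (p : nat) (A B : {set 'I_p}) : {set 'I_p} :=
  (A :\: B) :|: (B :\: A).

Definition cl (S : pzRingType) (p : nat) (s : 'I_p -> 'I_p -> bool)
  (A B : {set 'I_p}) : S :=
  \prod_(i in A) \prod_(j in B) (-1) ^+ s i j.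
Arguments cl {S p} s A B.

(* block indices (A, i) of the big (n 2^p) x (n 2^p) matrix *)
Definition idx (p n : nat) := ({set 'I_p} * 'I_n)%type.
Notation NN p n := #|{: idx p n}|.

Definition clmx (S : pzRingType) (p n : nat) (s : 'I_p -> 'I_p -> bool)
  (M : {set 'I_p} -> 'M[S]_n) : 'M[S]_(NN p n) :=
  \matrix_(r, c)
    let: (A, i) := (enum_val r : idx p n) in
    let: (B, j) := (enum_val c : idx p n) in
    cl s (symdiff A B) B * M (symdiff A B) i j.

Definition blk (S : Type) (p n : nat) (U : 'M[S]_(NN p n)) (C : {set 'I_p})
  : 'M[S]_n :=
  \matrix_(i, j) U (enum_rank ((C, i) : idx p n)) (enum_rank ((set0, j) : idx p n)).

Definition coord (p n : nat) := ({set 'I_p} * 'I_n * 'I_n)%type.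

Definition unitM (S : pzRingType) (p n : nat) (a : coord p n)
  : {set 'I_p} -> 'M[S]_n :=
  fun C => if C == a.1.1 then delta_mx a.1.2 a.2 else 0.
Arguments unitM S {p n} a C.

(* Polynomial functionals of the family (M^C): given uniformly over
   commutative rings S, with an embedding of the real constants. *)
Definition functional (R : pzRingType) (p n : nat) :=
  forall S : comPzRingType, (R -> S) -> ({set 'I_p} -> 'M[S]_n) -> S.

(* first partial derivative d/dM^a_{..} at M (exact, for polynomial maps):
   coefficient of t in F(M + t e_a) *)
Definition d1 (R : comNzRingType) (p n : nat) (F : functional R p n)
  (M : {set 'I_p} -> 'M[R]_n) (a : coord p n) : R :=
  (F {poly R} polyC (fun C => map_mx polyC (M C) + 'X *: unitM _ a C))`_1.

(* second partial derivative d^2/dM^a dM^b at M: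
   coefficient of t s in F(M + t e_a + s e_b) *)
Definition d2 (R : comNzRingType) (p n : nat) (F : functional R p n)
  (M : {set 'I_p} -> 'M[R]_n) (a b : coord p n) : R :=
  (F {poly {poly R}} (fun x => (x%:P)%:P)
     (fun C => map_mx (fun x => (x%:P)%:P) (M C)
               + ('X : {poly {poly R}}) *: unitM _ a C
               + (('X : {poly R})%:P) *: unitM _ b C))`_1`_1.

Definition gam (R : fieldType) (p n : nat) (s : 'I_p -> 'I_p -> bool)
  (a b : coord p n) : R :=
  let: (A, i, j) := a in
  let: (B, k, l) := b in
  if A == B then
    2^-1 * (((i == k) && (j == l))%:R + cl s A A * ((i == l) && (j == k))%:R)
  else 0.
Arguments gam {R p n} s a b.

(* L_{E,Cl} and Gamma_{E,Cl} on smooth (here: polynomial) functionals,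
   via the chain rule with L(M^C_ij) = 0. *)
Definition GammaCl (R : fieldType) (p n : nat) (s : 'I_p -> 'I_p -> bool)
  (F G : functional R p n) (M : {set 'I_p} -> 'M[R]_n) : R :=
  \sum_(a : coord p n) \sum_(b : coord p n) gam s a b * d1 F M a * d1 G M b.

Arguments GammaCl {R p n} s F G M.
Definition LCl (R : fieldType) (p n : nat) (s : 'I_p -> 'I_p -> bool)
  (F : functional R p n) (M : {set 'I_p} -> 'M[R]_n) : R :=
  \sum_(a : coord p n) \sum_(b : coord p n) gam s a b * d2 F M a b.

Arguments LCl {R p n} s F M.
Definition Pfun (R : pzRingType) (p n : nat) (s : 'I_p -> 'I_p -> bool) (x : R)
  : functional R p n :=
  fun S emb M => \det (clmx s M - (emb x)%:M).

Arguments Pfun {R p n} s x S emb M.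
Definition Ppoly (R : comNzRingType) (p n : nat) (s : 'I_p -> 'I_p -> bool)
  (M : {set 'I_p} -> 'M[R]_n) : {poly R} :=
  \det (map_mx polyC (clmx s M) - 'X%:M).

Definition Umx (R : fieldType) (p n : nat) (s : 'I_p -> 'I_p -> bool)
  (M : {set 'I_p} -> 'M[R]_n) (x : R) : 'M[R]_(NN p n) :=
  invmx (clmx s M - x%:M).


Definition Hfun (R : pzRingType) (p : nat) (s : 'I_p -> 'I_p -> bool)
  (C : {set 'I_p}) : R :=
  \sum_(A : {set 'I_p}) cl s A C * cl s C A.
Arguments Hfun {R p} s C.

(* Main.v *)
Require Import Defs.
From HB Require Import structures.
From mathcomp Require Import all_boot all_order all_algebra.
From mathcomp Require Import ring.
From mathcomp Require Import fingroup perm.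
Set Implicit Arguments. Unset Strict Implicit. Unset Printing Implicit Defensive.
Import Order.TTheory GRing.Theory Num.Theory.
Local Open Scope ring_scope.

Section Sets.
Variable p : nat.
Implicit Types A B C D E : {set 'I_p}.

Lemma in_symdiff A B x : (x \in symdiff A B) = (x \in A) (+) (x \in B).
Proof. by rewrite /symdiff !inE; case: (x \in A); case: (x \in B). Qed.

Lemma symdiffC A B : symdiff A B = symdiff B A.
Proof. by apply/setP=> x; rewrite !in_symdiff addbC. Qed.

Lemma symdiffA A B C : symdiff A (symdiff B C) = symdiff (symdiff A B) C.
Proof. by apply/setP=> x; rewrite !in_symdiff addbA. Qed.

Lemma symdiff0 A : symdiff A set0 = A.
Proof. by apply/setP=> x; rewrite !in_symdiff inE addbF. Qed.

Lemma symdiff0l A : symdiff set0 A = A.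
Proof. by rewrite symdiffC symdiff0. Qed.

Lemma symdiffv A : symdiff A A = set0.
Proof. by apply/setP=> x; rewrite !in_symdiff inE addbb. Qed.

Lemma symdiffK A B : symdiff A (symdiff A B) = B.
Proof. by apply/setP=> x; rewrite !in_symdiff addKb. Qed.

Lemma symdiffKr A B : symdiff (symdiff A B) B = A.
Proof. by apply/setP=> x; rewrite !in_symdiff addbK. Qed.

Lemma symdiff_eq0 A B : (symdiff A B == set0) = (A == B).
Proof.
apply/eqP/eqP => [h|->]; last exact: symdiffv.
by rewrite -(symdiffKr A B) h symdiff0l.
Qed.

Lemma symdiff_inj A : injective (symdiff A).
Proof. by move=> B1 B2 h; rewrite -(symdiffK A B1) h symdiffK. Qed.

End Sets.

Section Signs.
Variables (S : comPzRingType) (p : nat) (s : 'I_p -> 'I_p -> bool).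
Implicit Types A B C D E : {set 'I_p}.

Lemma sgn_sq (b : bool) : ((-1) ^+ b : S) * (-1) ^+ b = 1.
Proof. by case: b; rewrite ?expr1 ?expr0 ?mulrNN ?mulr1. Qed.

Lemma prod_symdiff (g : 'I_p -> S) A B : (forall i, g i * g i = 1) ->
  \prod_(i in symdiff A B) g i = \prod_(i in A) g i * \prod_(i in B) g i.
Proof.
move=> hg; rewrite !(big_mkcond (fun i => i \in _)) -big_split /=.
apply: eq_bigr => i _; rewrite in_symdiff.
by case: (i \in A); case: (i \in B); rewrite /= ?mulr1 ?mul1r ?hg.
Qed.

Lemma prod_sq (g : 'I_p -> S) (P : pred 'I_p) : (forall i, g i * g i = 1) ->
  \prod_(i | P i) g i * \prod_(i | P i) g i = 1.
Proof. by move=> hg; rewrite -big_split big1 // => i _; apply: hg. Qed.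

Lemma cl_sq A B : cl (S:=S) s A B * cl s A B = 1.
Proof.
rewrite /cl prod_sq // => i; rewrite prod_sq // => j; exact: sgn_sq.
Qed.

Lemma cl_sdl A B C : cl (S:=S) s (symdiff A B) C = cl s A C * cl s B C.
Proof.
rewrite /cl prod_symdiff // => i; rewrite prod_sq // => j; exact: sgn_sq.
Qed.

Lemma cl_sdr A B C : cl (S:=S) s C (symdiff A B) = cl s C A * cl s C B.
Proof.
rewrite /cl -big_split /=; apply: eq_bigr => i _.
rewrite prod_symdiff // => j; exact: sgn_sq.
Qed.

Lemma cl0l B : cl (S:=S) s set0 B = 1.
Proof. by rewrite /cl big_set0. Qed.

Lemma cl0r B : cl (S:=S) s B set0 = 1.
Proof. by rewrite /cl big1 // => i _; rewrite big_set0. Qed.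

End Signs.

Lemma cl_map (S S' : comPzRingType) (f : {rmorphism S -> S'}) p s (A B : {set 'I_p}) :
  f (cl s A B) = cl s A B.
Proof.
rewrite /cl rmorph_prod; apply: eq_bigr => i _; rewrite rmorph_prod.
by apply: eq_bigr => j _; rewrite rmorphXn rmorphN1.
Qed.

Section Clmx.
Variables (S : comNzRingType) (p n : nat) (s : 'I_p -> 'I_p -> bool).
Local Notation T := (idx p n).
Local Notation N := (NN p n).
Implicit Types A B C D E : {set 'I_p}.

Lemma sum_idx (F : 'I_N -> S) :
  \sum_r F r = \sum_(A : {set 'I_p}) \sum_(i : 'I_n) F (enum_rank ((A, i) : T)).
Proof.
rewrite (reindex (@enum_rank T)) /=; last by apply: onW_bij; exact: enum_rank_bij.
by rewrite pair_big /=; apply: eq_bigr => -[A i].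
Qed.

Lemma clmxE (Nf : {set 'I_p} -> 'M[S]_n) A i B j :
  clmx s Nf (enum_rank ((A, i) : T)) (enum_rank ((B, j) : T))
  = cl s (symdiff A B) B * Nf (symdiff A B) i j.
Proof. by rewrite /clmx mxE !enum_rankK. Qed.

Lemma idxE (X : 'M[S]_N) r c :
  X r c = X (enum_rank (enum_val r)) (enum_rank (enum_val c)).
Proof. by rewrite !enum_valK. Qed.

Lemma matrix_idxP (X Y : 'M[S]_N) :
  (forall A i B j, X (enum_rank ((A, i) : T)) (enum_rank ((B, j) : T))
                 = Y (enum_rank ((A, i) : T)) (enum_rank ((B, j) : T))) -> X = Y.
Proof.
move=> h; apply/matrixP => r c; rewrite (idxE X) (idxE Y).
by case: (enum_val r) => A i; case: (enum_val c) => B j.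
Qed.

Lemma blk_clmx (Nf : {set 'I_p} -> 'M[S]_n) C : blk (clmx s Nf) C = Nf C.
Proof.
by apply/matrixP => i j; rewrite mxE clmxE symdiff0 cl0r mul1r.
Qed.

Lemma clmx_lin (N1 N2 : {set 'I_p} -> 'M[S]_n) (c : S) :
  clmx s (fun C => N1 C + c *: N2 C) = clmx s N1 + c *: clmx s N2.
Proof.
apply: matrix_idxP => A i B j.
rewrite clmxE [RHS]mxE [(c *: clmx s N2) _ _]mxE !clmxE mxE mxE.
by rewrite mulrDr mulrCA.
Qed.

Lemma clmx_scalar (c : S) :
  clmx s (fun C => if C == set0 then (c%:M : 'M[S]_n) else 0) = c%:M.
Proof.
apply: matrix_idxP => A i B j.
rewrite clmxE !mxE symdiff_eq0 (inj_eq enum_rank_inj) xpair_eqE.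
case: eqP => [->|_] /=; last by rewrite mxE mulr0.
by rewrite symdiffv cl0l mul1r mxE.
Qed.

Lemma trmx_clmx (Nf : {set 'I_p} -> 'M[S]_n) :
  (clmx s Nf)^T = clmx s (fun C => cl s C C *: (Nf C)^T).
Proof.
apply: matrix_idxP => A i B j.
rewrite [LHS]mxE !clmxE !mxE [symdiff B A]symdiffC mulrA; congr (_ * _).
have e : symdiff B (symdiff A B) = A by rewrite symdiffC symdiffKr.
by rewrite -cl_sdr e.
Qed.

Lemma clmx_mul (N1 N2 : {set 'I_p} -> 'M[S]_n) :
  clmx s N1 *m clmx s N2 =
  clmx s (fun C => \sum_E (cl s E E * cl s E C) *: (N1 E *m N2 (symdiff C E))).
Proof.
apply: matrix_idxP => A i B j.
rewrite clmxE [LHS]mxE sum_idx summxE mulr_sumr.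
rewrite (reindex_inj (@symdiff_inj p A)) /=.
apply: eq_bigr => E _; rewrite mxE mxE mulrA mulr_sumr; apply: eq_bigr => k _.
rewrite !clmxE symdiffK.
have -> : symdiff (symdiff A E) B = symdiff (symdiff A B) E.
  by rewrite -!symdiffA [symdiff E B]symdiffC.
rewrite !(cl_sdr S) !(cl_sdl S); ring.
Qed.
End Clmx.

Lemma card_sets p : #|{set 'I_p}| = (2 ^ p)%N.
Proof. by rewrite -cardsT -powersetT card_powerset cardsT card_ord. Qed.

Section Clmx2.
Variables (S : comNzRingType) (p n : nat) (s : 'I_p -> 'I_p -> bool).
Local Notation T := (idx p n).
Local Notation N := (NN p n).

Lemma tr_clmx (Nf : {set 'I_p} -> 'M[S]_n) :
  \tr (clmx s Nf) = (2 ^ p)%:R * \tr (Nf set0).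
Proof.
rewrite /mxtrace sum_idx.
under eq_bigr do under eq_bigr do rewrite clmxE symdiffv (cl0l S) mul1r.
by rewrite sumr_const card_sets mulr_natl.
Qed.

Lemma clmx_map (S' : comNzRingType) (f : {rmorphism S -> S'})
  (Nf : {set 'I_p} -> 'M[S]_n) :
  map_mx f (clmx s Nf) = clmx s (fun C => map_mx f (Nf C)).
Proof.
apply: matrix_idxP => A i B j.
by rewrite [LHS]mxE !clmxE mxE rmorphM cl_map.
Qed.

Lemma clmx0 : clmx s (fun _ => 0 : 'M[S]_n) = 0.
Proof. by apply: matrix_idxP => A i B j; rewrite clmxE !mxE mulr0. Qed.

Definition isCl (X : 'M[S]_N) := exists Nf, X = clmx s Nf.

Lemma isClE X : isCl X -> X = clmx s (blk X).
Proof. by case=> Nf ->; apply: matrix_idxP => A i B j; rewrite !clmxE blk_clmx. Qed.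

Lemma isCl_add X Y : isCl X -> isCl Y -> isCl (X + Y).
Proof.
case=> N1 -> [N2 ->]; exists (fun C => N1 C + 1 *: N2 C).
by rewrite clmx_lin scale1r.
Qed.

Lemma isCl_scale c X : isCl X -> isCl (c *: X).
Proof.
case=> N1 ->; exists (fun C => 0 + c *: N1 C).
by rewrite clmx_lin clmx0 add0r.
Qed.

Lemma isCl_mul X Y : isCl X -> isCl Y -> isCl (X *m Y).
Proof. by case=> N1 -> [N2 ->]; rewrite clmx_mul; eexists. Qed.

Lemma isCl_scalar c : isCl (c%:M).
Proof. by rewrite -(@clmx_scalar S p n s c); eexists. Qed.

End Clmx2.

Lemma inv_closed (F : fieldType) (m : nat) (P : 'M[F]_m -> Prop)
  (hD : forall X Y, P X -> P Y -> P (X + Y))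
  (hM : forall X Y, P X -> P Y -> P (X *m Y))
  (hZ : forall c X, P X -> P (c *: X))
  (h1 : forall c, P c%:M) (A : 'M[F]_m) : P A -> A \in unitmx -> P (invmx A).
Proof.
case: m P hD hM hZ h1 A => [|m] P hD hM hZ h1 A PA uA.
  by have -> : invmx A = A by apply/matrixP => -[].
have Hh : forall q, P (horner_mx A q).
  elim/poly_ind => [|q c IH].
    by rewrite rmorph0; have := h1 0; rewrite -scalemx1 scale0r.
  rewrite rmorphD rmorphM /= horner_mx_X horner_mx_C -mulmxE.
  by apply: hD; [apply: hM|apply: h1].
set c := char_poly A.
have hc : c = drop_poly 1 c * 'X + (c`_0)%:P.
  apply/polyP => i; rewrite coefD coefMX coefC; case: i => [|i] /=.
    by rewrite add0r.
  by rewrite coef_drop_poly addn1 addr0.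
have := Cayley_Hamilton A; rewrite -/c hc rmorphD rmorphM /= horner_mx_X horner_mx_C => h0.
have c0 : c`_0 != 0.
  by rewrite char_poly_det mulf_neq0 ?signr_eq0 // -unitfE -unitmxE.
set H := horner_mx A (drop_poly 1 c) in h0.
have hA : H *m A = - (c`_0)%:M.
  by rewrite mulmxE; apply/eqP; rewrite -addr_eq0; apply/eqP.
have e : invmx A = (- (c`_0)^-1) *: H.
  have -> : H = H *m A *m invmx A by rewrite mulmxK.
  by rewrite hA mulNmx mul_scalar_mx scalerN scaleNr opprK scalerA mulVf // scale1r.
by rewrite e; apply: hZ; apply: Hh.
Qed.

Lemma deriv_sign (S : nzRingType) (b : bool) (q : {poly S}) :
  ((-1) ^+ b * q)^`() = (-1) ^+ b * q^`().
Proof. by case: b; rewrite ?expr0 ?mul1r ?expr1 ?mulN1r ?derivN. Qed.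

Lemma deriv_prod_seq (S : comNzRingType) (I : eqType) (r : seq I)
  (F : I -> {poly S}) : uniq r ->
  (\prod_(i <- r) F i)^`() = \sum_(i <- r) (F i)^`() * \prod_(j <- r | j != i) F j.
Proof.
elim: r => [|a r IH] /=; first by rewrite !big_nil -polyC1 derivC.
move/andP=> [anr ur].
rewrite !big_cons derivM IH // eqxx /=; congr (_ + _).
  congr (_ * _); rewrite [RHS]big_seq_cond [LHS]big_seq; apply: eq_bigl => j.
  case jr: (j \in r) => //=; symmetry.
  by apply/negP => /eqP ej; rewrite -ej jr in anr.
rewrite mulr_sumr; apply: eq_big_seq => i ir.
rewrite big_cons; have -> : (a != i) by apply/negP => /eqP ai; rewrite ai ir in anr.
by rewrite mulrCA.
Qed.

Lemma deriv_prod (S : comNzRingType) (I : finType) (F : I -> {poly S}) :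
  (\prod_(i : I) F i)^`() = \sum_(i : I) (F i)^`() * \prod_(j | j != i) F j.
Proof. exact: (deriv_prod_seq F (index_enum_uniq I)). Qed.

Lemma deriv_det (S : comNzRingType) m (K : 'M[{poly S}]_m) :
  (\det K)^`() = \tr (\adj K *m map_mx deriv K).
Proof.
rewrite /determinant raddf_sum /=.
under eq_bigr do rewrite deriv_sign deriv_prod mulr_sumr.
rewrite exchange_big /mxtrace.
have row_i : forall i : 'I_m,
  \sum_(s : 'S_m) (-1) ^+ s * ((K i (s i))^`() * \prod_(j | j != i) K j (s j))
  = \sum_k (K i k)^`() * cofactor K i k.
  move=> i.
  pose Ki := \matrix_(r, c) if r == i then (K r c)^`() else K r c.
  have -> : \sum_k (K i k)^`() * cofactor K i k = \det Ki.
    rewrite (expand_det_row Ki i); apply: eq_bigr => k _.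
    rewrite /Ki mxE eqxx; congr (_ * _); rewrite /cofactor; congr (_ * \det _).
    apply/matrixP => a b; rewrite !mxE.
    by have -> : (lift i a == i) = false by apply/negbTE; rewrite eq_sym neq_lift.
  rewrite /determinant; apply: eq_bigr => s _; congr (_ * _).
  rewrite [RHS](bigD1 i) //= /Ki mxE eqxx; congr (_ * _); apply: eq_bigr => j ji.
  by rewrite mxE (negbTE ji).
under eq_bigr do rewrite row_i.
rewrite [RHS](eq_bigr (fun i => \sum_k cofactor K k i * (K k i)^`())); last first.
  by move=> i _; rewrite mxE; apply: eq_bigr => k _; rewrite !mxE.
rewrite [RHS]exchange_big; apply: eq_bigr => i _; apply: eq_bigr => k _.
by rewrite mulrC.
Qed.

Lemma coef1_deriv (S : comNzRingType) (q : {poly S}) : q`_1 = (q^`()).[0].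
Proof. by rewrite horner_coef0 coef_deriv mulr1n. Qed.

Lemma deriv_mulmx (S : nzRingType) m k l (X : 'M[{poly S}]_(m, k)) (Y : 'M_(k, l)) :
  map_mx deriv (X *m Y) = map_mx deriv X *m Y + X *m map_mx deriv Y.
Proof.
apply/matrixP => i j; rewrite !mxE raddf_sum -big_split /=.
by apply: eq_bigr => t _; rewrite !mxE derivM.
Qed.

Lemma eval_tr (S : comNzRingType) m (X : 'M[{poly S}]_m) x :
  (\tr X).[x] = \tr (map_mx (horner_eval x) X).
Proof. by rewrite trace_map_mx. Qed.

Lemma J1 (S : comNzRingType) m (Y Z : 'M[S]_m) :
  (\det (map_mx polyC Y + 'X *: map_mx polyC Z))`_1 = \tr (\adj Y *m Z).
Proof.
rewrite coef1_deriv deriv_det eval_tr map_mxM map_mx_adj.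
have -> : map_mx (horner_eval 0) (map_mx polyC Y + 'X *: map_mx polyC Z) = Y.
  by apply/matrixP => i j; rewrite !mxE /horner_eval !hornerE.
congr (\tr (_ *m _)); apply/matrixP => i j; rewrite !mxE /horner_eval.
rewrite derivD derivC derivM derivX derivC mulr0 addr0 mul1r add0r; exact: hornerC.
Qed.

Section Charpoly.
Variables (S : comNzRingType) (m : nat) (B : 'M[S]_m).
Local Notation Ap := (map_mx polyC B - 'X%:M).

Lemma deriv_Ap : map_mx deriv Ap = (-1)%:M.
Proof.
apply/matrixP => i j; rewrite !mxE derivB derivC derivMn derivX sub0r.
by rewrite mulNrn.
Qed.

Lemma eval_Ap x : map_mx (horner_eval x) Ap = B - x%:M.
Proof.
apply/matrixP => i j; rewrite !mxE horner_evalE hornerD hornerN hornerC.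
by rewrite hornerMn hornerX.
Qed.

Lemma Pderiv : (\det Ap)^`() = - \tr (\adj Ap).
Proof. by rewrite deriv_det deriv_Ap mul_mx_scalar mxtraceZ mulN1r. Qed.

Lemma Pderiv2 : (\det Ap)^`()^`() = - \tr (map_mx deriv (\adj Ap)).
Proof.
rewrite Pderiv derivN; congr (- _).
by rewrite /mxtrace raddf_sum; apply: eq_bigr => i _; rewrite [RHS]mxE.
Qed.

Lemma adj_deriv_rel :
  - \adj Ap + Ap *m map_mx deriv (\adj Ap) = ((\det Ap)^`())%:M.
Proof.
have := deriv_mulmx Ap (\adj Ap); rewrite mul_mx_adj deriv_Ap mul_scalar_mx scaleN1r.
move=> <-; apply/matrixP => i j; rewrite !mxE derivMn.
by case: (i == j); rewrite ?mulr1n ?mulr0n ?deriv0.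
Qed.

Lemma eval_P x : (\det Ap).[x] = \det (B - x%:M).
Proof. by rewrite -horner_evalE -det_map_mx eval_Ap. Qed.

Lemma eval_P1 x : (\det Ap)^`().[x] = - \tr (\adj (B - x%:M)).
Proof. by rewrite Pderiv hornerN eval_tr map_mx_adj eval_Ap. Qed.

End Charpoly.

Lemma tr_deriv (S : nzRingType) m (X : 'M[{poly S}]_m) :
  (\tr X)^`() = \tr (map_mx deriv X).
Proof. by rewrite /mxtrace raddf_sum; apply: eq_bigr => i _; rewrite [RHS]mxE. Qed.

Lemma adjE (F : fieldType) m (A : 'M[F]_m) : A \in unitmx ->
  \adj A = \det A *: invmx A.
Proof.
move=> uA; rewrite /invmx uA scalerA divff ?scale1r //.
by rewrite -unitfE -unitmxE.
Qed.

Lemma d2_gen (F : fieldType) m (A Ea Eb : 'M[F]_m) : A \in unitmx ->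
  (\det (map_mx polyC (map_mx polyC A + 'X *: map_mx polyC Eb)
         + 'X *: map_mx polyC (map_mx polyC Ea)))`_1`_1
  = \det A * (\tr (invmx A *m Eb) * \tr (invmx A *m Ea)
              - \tr (invmx A *m Eb *m invmx A *m Ea)).
Proof.
move=> uA; rewrite J1.
set K := map_mx polyC A + 'X *: map_mx polyC Eb.
rewrite coef1_deriv tr_deriv deriv_mulmx.
have -> : map_mx deriv (map_mx polyC Ea) = 0.
  by apply/matrixP => i j; rewrite !mxE derivC.
rewrite mulmx0 addr0 eval_tr map_mxM.
set Dm := map_mx (horner_eval 0) (map_mx deriv (\adj K)).
have hK0 : map_mx (horner_eval 0) K = A.
  by apply/matrixP => i j; rewrite !mxE /horner_eval !hornerE.
have hEa : map_mx (horner_eval 0) (map_mx polyC Ea) = Ea.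
  by apply/matrixP => i j; rewrite !mxE; exact: hornerC.
rewrite hEa.
have hD : Eb *m \adj A + A *m Dm = (\tr (\adj A *m Eb))%:M.
  have := deriv_mulmx K (\adj K).
  rewrite mul_mx_adj.
  have -> : map_mx deriv K = map_mx polyC Eb.
    apply/matrixP => i j; rewrite !mxE derivD derivC derivM derivX derivC.
    by rewrite mulr0 addr0 mul1r add0r.
  move=> h.
  have := congr1 (map_mx (horner_eval 0)) h.
  rewrite map_mxD !map_mxM map_mx_adj hK0 -/Dm.
  have -> : map_mx (horner_eval 0) (map_mx polyC Eb) = Eb.
    by apply/matrixP => i j; rewrite !mxE; exact: hornerC.
  move=> <-; rewrite -J1 coef1_deriv.
  apply/matrixP => i j; rewrite !mxE derivMn.
  by case: (i == j); rewrite ?mulr1n ?mulr0n ?deriv0 //; exact: horner0.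
have eD : Dm = invmx A *m ((\tr (\adj A *m Eb))%:M - Eb *m \adj A).
  by rewrite -hD addrC addKr mulKmx.
rewrite eD adjE // mulmxBr mulmxBl raddfB /= -scalemxAl -scalemxAr.
rewrite mul_mx_scalar -!scalemxAl !mxtraceZ.
rewrite -scalemxAr -scalemxAl mxtraceZ !mulmxA; ring.
Qed.

Section Spec.
Variables (R : fieldType) (p n : nat) (s : 'I_p -> 'I_p -> bool)
  (M : {set 'I_p} -> 'M[R]_n).
Local Notation N := (NN p n).

Lemma d1E x a : d1 (Pfun s x) M a
  = \tr (\adj (clmx s M - x%:M) *m clmx s (unitM R a)).
Proof.
rewrite /d1 /Pfun -J1; apply: (congr1 (fun q : {poly R} => q`_1)).
have E : forall K1 K2 : 'M[{poly R}]_N, K1 = K2 -> \det K1 = \det K2 by move=> ? ? ->.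
apply: E.
apply/matrixP => r c; rewrite !mxE.
case: (enum_val r) => A i; case: (enum_val c) => B j.
rewrite /unitM; case: (_ == _); rewrite ?mxE;
by rewrite ?rmorphD ?rmorphB ?rmorphM ?rmorphMn ?rmorph_nat ?rmorph0 ?cl_map; ring.
Qed.
Lemma d2E x a b : (clmx s M - x%:M) \in unitmx ->
  d2 (Pfun s x) M a b =
  \det (clmx s M - x%:M) *
    (\tr (invmx (clmx s M - x%:M) *m clmx s (unitM R b))
       * \tr (invmx (clmx s M - x%:M) *m clmx s (unitM R a))
     - \tr (invmx (clmx s M - x%:M) *m clmx s (unitM R b)
            *m invmx (clmx s M - x%:M) *m clmx s (unitM R a))).
Proof.
move=> uA; rewrite /d2 /Pfun -(d2_gen (clmx s (unitM R a)) (clmx s (unitM R b)) uA).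
apply: (congr1 (fun q : {poly {poly R}} => q`_1`_1)).
have E : forall K1 K2 : 'M[{poly {poly R}}]_N, K1 = K2 -> \det K1 = \det K2 by move=> ? ? ->.
apply: E.
apply/matrixP => r c; rewrite !mxE.
case: (enum_val r) => A i; case: (enum_val c) => B j.
rewrite /unitM; case: (_ == _); case: (_ == _); rewrite ?mxE;
by rewrite ?rmorphD ?rmorphB ?rmorphM ?rmorphMn ?rmorph_nat ?rmorph0 ?cl_map; ring.
Qed.
End Spec.

Section Sums.
Variables (R : numFieldType) (p n : nat) (s : 'I_p -> 'I_p -> bool).
Local Notation N := (NN p n).
Implicit Types (C D E F : {set 'I_p}).

Lemma sum_delta (T : finType) (G : T -> R) j : \sum_k (j == k)%:R * G k = G j.
Proof.
rewrite (bigD1 j) //= eqxx mul1r big1 ?addr0 // => k kj.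
by rewrite eq_sym (negbTE kj) mul0r.
Qed.

Lemma sum_coord (G : Defs.coord p n -> R) :
  \sum_a G a = \sum_C \sum_(i < n) \sum_(j < n) G ((C, i), j).
Proof.
transitivity (\sum_(q : {set 'I_p} * 'I_n) \sum_(j < n) G (q, j)).
  by rewrite pair_big; apply: eq_bigr => -[q j].
by rewrite [RHS]pair_big; apply: eq_bigr => -[C i].
Qed.

Lemma sum_set_eq (G : {set 'I_p} -> R) C :
  \sum_D (if C == D then G D else 0) = G C.
Proof.
rewrite (bigD1 C) //= eqxx big1 ?addr0 // => D DC.
by rewrite eq_sym (negbTE DC).
Qed.

Lemma gam_sum (G : Defs.coord p n -> R) C i j :
  \sum_b gam s ((C, i), j) b * G b
  = 2^-1 * (G ((C, i), j) + cl s C C * G ((C, j), i)).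
Proof.
rewrite sum_coord.
under eq_bigr => D _ do under eq_bigr => k _ do under eq_bigr => l _ do
  rewrite /= (fun_if (fun x => x * G ((D, k), l))) mul0r.
rewrite -[RHS](sum_set_eq (fun D => 2^-1 * (G ((D, i), j) + cl s D D * G ((D, j), i)))).
apply: eq_bigr => D _; case: eqP => [<-|_] /=; last by rewrite big1 // => k _; rewrite big1.
have h1 : \sum_(k < n) \sum_(l < n) (((i == k) && (j == l))%:R * G ((C, k), l)) = G ((C, i), j).
  rewrite (eq_bigr (fun k => (i == k)%:R * \sum_(l < n) (j == l)%:R * G ((C, k), l))).
    by rewrite sum_delta sum_delta.
  by move=> k _; rewrite mulr_sumr; apply: eq_bigr => l _; rewrite -mulnb natrM mulrA.
have h2 : \sum_(k < n) \sum_(l < n) (((i == l) && (j == k))%:R * G ((C, k), l)) = G ((C, j), i).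
  rewrite exchange_big /=.
  rewrite (eq_bigr (fun l => (i == l)%:R * \sum_(k < n) (j == k)%:R * G ((C, k), l))).
    by rewrite sum_delta sum_delta.
  by move=> l _; rewrite mulr_sumr; apply: eq_bigr => k _; rewrite -mulnb natrM mulrA.
rewrite -h1 -h2.
rewrite [cl s C C * _]mulr_sumr -big_split /= mulr_sumr; apply: eq_bigr => k _.
rewrite [cl s C C * _]mulr_sumr -big_split /= mulr_sumr; apply: eq_bigr => l _.
ring.
Qed.
End Sums.

Section Traces.
Variables (R : numFieldType) (p n : nat) (s : 'I_p -> 'I_p -> bool).
Local Notation N := (NN p n).
Implicit Types (C D E F : {set 'I_p}).

Lemma clmx_ext (N1 N2 : {set 'I_p} -> 'M[R]_n) :
  (forall C, N1 C = N2 C) -> clmx s N1 = clmx s N2.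
Proof. by move=> h; apply: matrix_idxP => A i B j; rewrite !clmxE h. Qed.

Lemma sum_delta_r (T : finType) (G : T -> R) j : \sum_k G k * (k == j)%:R = G j.
Proof.
by rewrite -[RHS](sum_delta G j); apply: eq_bigr => k _; rewrite mulrC eq_sym.
Qed.

Lemma tr_delta (X : 'M[R]_n) i j : \tr (X *m delta_mx i j) = X j i.
Proof.
transitivity (\sum_k (j == k)%:R * \sum_l (i == l)%:R * X k l).
  apply: eq_bigr => k _; rewrite mxE mulr_sumr; apply: eq_bigr => l _.
  by rewrite mxE -mulnb natrM [l == i]eq_sym [k == j]eq_sym; ring.
rewrite (sum_delta (fun k => \sum_l (i == l)%:R * X k l)).
exact: (sum_delta (fun l => X j l)).
Qed.

Lemma tr_dd (X Y : 'M[R]_n) i j k l :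
  \tr (X *m delta_mx k l *m (Y *m delta_mx i j)) = X j k * Y l i.
Proof.
rewrite mulmxA tr_delta mxE.
transitivity (\sum_t (l == t)%:R * (X j k * Y t i)); last by rewrite sum_delta.
apply: eq_bigr => t _; rewrite mxE.
under eq_bigr do rewrite mxE -mulnb natrM mulrA.
by rewrite -mulr_suml sum_delta_r eq_sym; ring.
Qed.

Lemma tr_unit (Nf : {set 'I_p} -> 'M[R]_n) C i j :
  \tr (clmx s Nf *m clmx s (unitM R ((C, i), j))) = (2 ^ p)%:R * (cl s C C * Nf C j i).
Proof.
rewrite clmx_mul tr_clmx; congr (_ * _); rewrite raddf_sum /= (bigD1 C) //= big1 ?addr0.
  by rewrite symdiff0l cl0r mulr1 /unitM eqxx /= linearZ /= tr_delta.
by move=> E EC; rewrite symdiff0l /unitM (negbTE EC) mulmx0 scaler0 linear0.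
Qed.

Lemma tr_prod (NX NY : {set 'I_p} -> 'M[R]_n) :
  \tr (clmx s NX *m clmx s NY) = (2 ^ p)%:R * \sum_E cl s E E * \tr (NX E *m NY E).
Proof.
rewrite clmx_mul tr_clmx raddf_sum; congr (_ * _); apply: eq_bigr => E _.
rewrite symdiff0l cl0r mulr1; exact: mxtraceZ.
Qed.

Lemma clmx_unit_r (Nf : {set 'I_p} -> 'M[R]_n) C k l :
  clmx s Nf *m clmx s (unitM R ((C, k), l)) =
  clmx s (fun D => (cl s (symdiff D C) (symdiff D C) * cl s (symdiff D C) D)
                     *: (Nf (symdiff D C) *m delta_mx k l)).
Proof.
rewrite clmx_mul; apply: clmx_ext => D.
rewrite (bigD1 (symdiff D C)) //= big1 ?addr0.
  by rewrite symdiffK /unitM eqxx.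
move=> E ED; rewrite /unitM.
have -> : (symdiff D E == C) = false.
  apply/negbTE; apply: contra ED => /eqP <-; by rewrite symdiffK.
by rewrite mulmx0 scaler0.
Qed.

Lemma T_formula (Nf : {set 'I_p} -> 'M[R]_n) C i j k l :
  \tr (clmx s Nf *m clmx s (unitM R ((C, k), l)) *m clmx s Nf
        *m clmx s (unitM R ((C, i), j)))
  = (2 ^ p)%:R * \sum_D cl s D D *
      (Nf (symdiff D C) j k * Nf (symdiff D C) l i).
Proof.
rewrite -mulmxA !clmx_unit_r tr_prod; congr (_ * _); apply: eq_bigr => D _.
rewrite -scalemxAl -scalemxAr !mxtraceZ tr_dd; congr (_ * _).
set a := cl s (symdiff D C) (symdiff D C); set b := cl s (symdiff D C) D.
set X := Nf (symdiff D C) j k * Nf (symdiff D C) l i.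
have ha : a * a = 1 by apply: cl_sq.
have hb : b * b = 1 by apply: cl_sq.
have -> : a * b * (a * b * X) = (a * a) * (b * b) * X by ring.
by rewrite ha hb !mul1r.
Qed.
End Traces.

Section GLemmas.
Variables (R : numFieldType) (p n : nat) (s : 'I_p -> 'I_p -> bool).
Local Notation N := (NN p n).
Implicit Types (C D E F : {set 'I_p}).

Definition symf (Nf : {set 'I_p} -> 'M[R]_n) := forall C, (Nf C)^T = cl s C C *: Nf C.

Lemma sym_entry Nf : symf Nf -> forall C i j, Nf C j i = cl s C C * Nf C i j.
Proof.
move=> h C i j; have /matrixP /(_ i j) := h C.
by rewrite !mxE.
Qed.

Lemma cl_pm A B : cl (S:=R) s A B = 1 \/ cl (S:=R) s A B = -1.
Proof.
rewrite /cl; apply: (big_ind (fun x : R => x = 1 \/ x = -1)).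
- by left.
- by move=> x y [->|->] [->|->]; rewrite ?mulr1 ?mulrN1 ?opprK; auto.
move=> i _; apply: (big_ind (fun x : R => x = 1 \/ x = -1)).
- by left.
- by move=> x y [->|->] [->|->]; rewrite ?mulr1 ?mulrN1 ?opprK; auto.
by move=> j _; case: (s i j); rewrite ?expr1 ?expr0; auto.
Qed.

Lemma two_neq0 : (2 : R) != 0.
Proof. by rewrite pnatr_eq0. Qed.

Lemma tr_mulE (X Y : 'M[R]_n) : \tr (X *m Y) = \sum_i \sum_j X i j * Y j i.
Proof. by rewrite /mxtrace; apply: eq_bigr => i _; rewrite mxE. Qed.

Lemma G1 (NX NY : {set 'I_p} -> 'M[R]_n) : symf NX -> symf NY ->
  \sum_a \sum_b gam s a b * \tr (clmx s NX *m clmx s (unitM R a))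
                          * \tr (clmx s NY *m clmx s (unitM R b))
  = (2 ^ p)%:R * \tr (clmx s NX *m clmx s NY).
Proof.
move=> hX hY.
under eq_bigr => a _ do under eq_bigr => b _ do rewrite mulrAC.
under eq_bigr => a _ do rewrite -mulr_suml.
rewrite sum_coord tr_prod mulr_sumr mulr_sumr; apply: eq_bigr => C _.
rewrite (tr_mulE (NX C) (NY C)) !mulr_sumr; apply: eq_bigr => i _.
rewrite !mulr_sumr; apply: eq_bigr => j _.
rewrite (gam_sum s (fun b : Defs.coord p n => \tr (clmx s NY *m clmx s (unitM R b)))) !tr_unit.
rewrite (sym_entry hX C i j) (sym_entry hY C i j).
have two := two_neq0.
by case: (cl_pm C C) => ->; field.
Qed.
Lemma G3 (Nf : {set 'I_p} -> 'M[R]_n) : symf Nf ->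
  \sum_a \sum_b gam s a b * \tr (clmx s Nf *m clmx s (unitM R b) *m clmx s Nf
                                   *m clmx s (unitM R a))
  = 2^-1 * (\sum_A cl s A A) * \tr (clmx s Nf *m clmx s Nf)
    + ((2 ^ p)%:R / 2) * \sum_C cl s C C * Hfun s C * (\tr (Nf C)) ^+ 2.
Proof.
move=> h.
pose Q F := \sum_(i < n) \sum_(j < n) Nf F j i * Nf F j i.
pose T2 F := \sum_(i < n) \sum_(j < n) Nf F j j * Nf F i i.
have hP : forall F, \tr (Nf F *m Nf F) = cl s F F * Q F.
  move=> F; rewrite tr_mulE /Q mulr_sumr; apply: eq_bigr => i _.
  rewrite mulr_sumr; apply: eq_bigr => j _; rewrite (sym_entry h F i j).
  by case: (cl_pm F F) => ->; ring.
have hT : forall F, (\tr (Nf F)) ^+ 2 = T2 F.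
  move=> F; rewrite expr2 /T2 /mxtrace mulr_suml; apply: eq_bigr => i _.
  by rewrite mulr_sumr; apply: eq_bigr => j _; rewrite mulrC.
have eL : forall C i j,
  \sum_b gam s ((C, i), j) b * \tr (clmx s Nf *m clmx s (unitM R b) *m clmx s Nf
                                     *m clmx s (unitM R ((C, i), j)))
  = \sum_D 2^-1 * (2 ^ p)%:R * cl s D D *
       (Nf (symdiff D C) j i * Nf (symdiff D C) j i
        + cl s C C * (Nf (symdiff D C) j j * Nf (symdiff D C) i i)).
  move=> C i j.
  rewrite (gam_sum s (fun b : Defs.coord p n => \tr (clmx s Nf *m clmx s (unitM R b)
            *m clmx s Nf *m clmx s (unitM R ((C, i), j))))) !T_formula.
  rewrite [RHS](eq_bigr (fun D => 2^-1 * ((2 ^ p)%:R * (cl s D D * (Nf (symdiff D C) j i * Nf (symdiff D C) j i)))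
             + 2^-1 * (cl s C C * ((2 ^ p)%:R * (cl s D D * (Nf (symdiff D C) j j * Nf (symdiff D C) i i)))))); last by move=> D _; ring.
  by rewrite big_split /= -!mulr_sumr mulrDr.
rewrite sum_coord.
under eq_bigr => C _ do under eq_bigr => i _ do under eq_bigr => j _ do rewrite eL.
have eC : forall C,
  \sum_(i < n) \sum_(j < n) \sum_D
     2^-1 * (2 ^ p)%:R * cl s D D *
     (Nf (symdiff D C) j i * Nf (symdiff D C) j i +
      cl s C C * (Nf (symdiff D C) j j * Nf (symdiff D C) i i))
  = \sum_F 2^-1 * (2 ^ p)%:R * cl s (symdiff F C) (symdiff F C) * (Q F + cl s C C * T2 F).
  move=> C.
  under eq_bigr => i _ do rewrite exchange_big.
  rewrite exchange_big.
  have injC : injective (fun F => symdiff F C).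
    by move=> F1 F2 /=; rewrite !(symdiffC _ C); apply: symdiff_inj.
  rewrite (reindex_inj injC) /=; apply: eq_bigr => F _; rewrite symdiffKr.
  rewrite /Q /T2 mulr_sumr -big_split mulr_sumr; apply: eq_bigr => i _.
  rewrite mulr_sumr -big_split mulr_sumr; apply: eq_bigr => j _.
  by [].
under eq_bigr => C _ do rewrite eC.
have two := two_neq0.
have eF : forall F,
  \sum_C 2^-1 * (2 ^ p)%:R * cl s (symdiff F C) (symdiff F C) * (Q F + cl s C C * T2 F)
  = 2^-1 * (\sum_A cl s A A) * ((2 ^ p)%:R * (cl s F F * (cl s F F * Q F)))
    + (2 ^ p)%:R / 2 * (cl s F F * Hfun s F * T2 F).
  move=> F.
  transitivity (\sum_C (2^-1 * cl s (symdiff F C) (symdiff F C)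
                         * ((2 ^ p)%:R * (cl s F F * (cl s F F * Q F)))
                       + (2 ^ p)%:R / 2 * (cl s F F * (cl s C F * cl s F C) * T2 F))).
    apply: eq_bigr => C _; rewrite !(cl_sdl R) !(cl_sdr R).
    case: (cl_pm F F) => ->; case: (cl_pm F C) => ->;
    case: (cl_pm C F) => ->; case: (cl_pm C C) => ->; field; done.

  rewrite big_split /=; congr (_ + _).
    rewrite -mulr_suml -mulr_sumr; congr (_ * _ * _).
    by rewrite [RHS](reindex_inj (@symdiff_inj p F)).
  rewrite -mulr_sumr /Hfun; congr (_ * _).
  by rewrite -mulr_suml -mulr_sumr.
rewrite exchange_big (eq_bigr _ (fun F _ => eF F)) big_split /=.
rewrite -!mulr_sumr tr_prod; congr (_ + _).
  by congr (_ * (_ * _)); apply: eq_bigr => F _; rewrite hP.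
by congr (_ * _); apply: eq_bigr => C _; rewrite hT.
Qed.
End GLemmas.

Lemma poly_zero_all (R : numDomainType) (q : {poly R}) :
  (forall t, q.[t] = 0) -> q = 0.
Proof.
move=> h; apply/eqP; apply/negPn/negP => q0.
have inj : injective (fun i : nat => (i%:R : R)).
  by move=> i j /eqP; rewrite eqr_nat => /eqP.
have hall : all (root q) [seq (i%:R : R) | i <- iota 0 (size q)].
  by apply/allP => t _; apply/rootP; apply: h.
have hu : uniq [seq (i%:R : R) | i <- iota 0 (size q)].
  by rewrite (map_inj_uniq inj) iota_uniq.
have := max_poly_roots q0 hall hu.
by rewrite size_map size_iota ltnn.
Qed.

Section AdjImage.
Variables (R : realFieldType) (p n : nat) (s : 'I_p -> 'I_p -> bool)
  (M : {set 'I_p} -> 'M[R]_n).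
Local Notation N := (NN p n).
Local Notation B := (clmx s M).
Local Notation Ap := (map_mx polyC (clmx s M) - 'X%:M).

Lemma Ppoly_neq0 : Ppoly s M != 0.
Proof.
rewrite /Ppoly.
have -> : map_mx polyC B - 'X%:M = (-1) *: char_poly_mx B.
  by rewrite scaleN1r /char_poly_mx opprB.
by rewrite detZ mulf_neq0 ?signr_eq0 // monic_neq0 // char_poly_monic.
Qed.

Lemma isCl_A x : isCl s (clmx s M - x%:M).
Proof.
have -> : clmx s M - x%:M = clmx s M + (- x)%:M by rewrite raddfN.
by apply: isCl_add; [exists M | apply: isCl_scalar].
Qed.

Lemma isCl_inv x : (clmx s M - x%:M) \in unitmx -> isCl s (invmx (clmx s M - x%:M)).
Proof.
move=> u; apply: inv_closed => //.
- by move=> X Y; apply: isCl_add.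
- by move=> X Y; apply: isCl_mul.
- by move=> c X; apply: isCl_scale.
- by move=> c; apply: isCl_scalar.
exact: isCl_A.
Qed.

Lemma unit_A x : (Ppoly s M).[x] != 0 -> (clmx s M - x%:M) \in unitmx.
Proof. by rewrite /Ppoly eval_P unitmxE unitfE. Qed.

Lemma blk_map (S S' : comNzRingType) (f : {rmorphism S -> S'}) (X : 'M[S]_N) C :
  map_mx f (blk X C) = blk (map_mx f X) C.
Proof. by apply/matrixP => i j; rewrite !mxE. Qed.

Lemma isCl_adj x : isCl s (\adj (clmx s M - x%:M)).
Proof.
pose Ad := \adj Ap.
have hev : forall t, map_mx (horner_eval t) Ad = \adj (clmx s M - t%:M).
  by move=> t; rewrite map_mx_adj eval_Ap.
have hev2 : forall t, map_mx (horner_eval t) (clmx s (blk Ad))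
                      = clmx s (blk (\adj (clmx s M - t%:M))).
  move=> t; rewrite clmx_map -hev; apply: matrix_idxP => A i B' j.
  by rewrite !clmxE blk_map.
have key : Ad = clmx s (blk Ad).
  apply/matrixP => r c; apply/eqP; rewrite -subr_eq0; apply/eqP.
  set q := _ - _.
  have : q * Ppoly s M = 0.
    apply: poly_zero_all => t; rewrite hornerM.
    have [P0|Pn0] := eqVneq (Ppoly s M).[t] 0; first by rewrite P0 mulr0.
    suff -> : q.[t] = 0 by rewrite mul0r.
    have u := unit_A Pn0.
    have hC : isCl s (\adj (clmx s M - t%:M)).
      by rewrite adjE //; apply: isCl_scale; apply: isCl_inv.
    rewrite /q hornerD hornerN.
    have e1 : (Ad r c).[t] = \adj (clmx s M - t%:M) r c.
      by have /matrixP /(_ r c) := hev t; rewrite mxE => <-; reflexivity.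
    have e2 : (clmx s (blk Ad) r c).[t] = clmx s (blk (\adj (clmx s M - t%:M))) r c.
      by have /matrixP /(_ r c) := hev2 t; rewrite mxE => <-; reflexivity.
    rewrite e1 e2.
    by rewrite -(isClE hC) subrr.
  by move/eqP; rewrite mulf_eq0 (negbTE Ppoly_neq0) orbF => /eqP.
exists (blk (\adj (clmx s M - x%:M))).
by rewrite -[LHS]hev key hev2.
Qed.
End AdjImage.

Section MainSec.
Variables (R : realFieldType) (p n : nat) (s : 'I_p -> 'I_p -> bool)
  (M : {set 'I_p} -> 'M[R]_n)
  (hM : forall C, (M C)^T = cl s C C *: M C).
Local Notation N := (NN p n).
Local Notation B := (clmx s M).

Lemma B_sym : B^T = B.
Proof.
rewrite trmx_clmx; apply: clmx_ext => C.
by rewrite hM scalerA (cl_sq R) scale1r.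
Qed.

Lemma A_sym x : (B - x%:M)^T = B - x%:M.
Proof. by rewrite raddfB /= B_sym tr_scalar_mx. Qed.

Lemma sym_blk (X : 'M[R]_N) : isCl s X -> X^T = X -> symf s (blk X).
Proof.
move=> hX hT C.
have e : clmx s (fun C => cl s C C *: (blk X C)^T) = clmx s (blk X).
  by rewrite -trmx_clmx -(isClE hX).
have e' : cl s C C *: (blk X C)^T = blk X C.
  apply/matrixP => i j.
  have /matrixP /(_ (enum_rank ((C, i) : idx p n)) (enum_rank ((set0, j) : idx p n))) := e.
  by rewrite !clmxE symdiff0 cl0r !mul1r.
by rewrite -{2}e' scalerA (cl_sq R) scale1r.
Qed.

Lemma ePP x : (Ppoly s M).[x] = \det (B - x%:M).
Proof. exact: eval_P. Qed.

Lemma ePP1 x : (Ppoly s M)^`().[x] = - \tr (\adj (B - x%:M)).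
Proof. exact: eval_P1. Qed.

Lemma adj_sym x : (\adj (B - x%:M))^T = \adj (B - x%:M).
Proof. by rewrite trmx_adj A_sym. Qed.

Lemma part2 x y : x != y ->
  GammaCl s (Pfun s x) (Pfun s y) M
  = (2 ^+ p) / (y - x) * ((Ppoly s M)^`().[x] * (Ppoly s M).[y]
                          - (Ppoly s M)^`().[y] * (Ppoly s M).[x]).
Proof.
move=> hxy.
rewrite /GammaCl.
under eq_bigr => a _ do under eq_bigr => b _ do rewrite !d1E.
set X := \adj (B - x%:M); set Y := \adj (B - y%:M).
have hX : isCl s X by apply: isCl_adj.
have hY : isCl s Y by apply: isCl_adj.
have sX := sym_blk hX (adj_sym x).
have sY := sym_blk hY (adj_sym y).
rewrite (isClE hX) (isClE hY) (G1 sX sY) -(isClE hX) -(isClE hY).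
have e : B - y%:M = B - x%:M + (x - y)%:M by rewrite raddfB addrA subrK.
have h1 : X *m (B - y%:M) *m Y = \det (B - y%:M) *: X.
  by rewrite -mulmxA mul_mx_adj mul_mx_scalar.
have h2 : X *m (B - x%:M) = (\det (B - x%:M))%:M by rewrite mul_adj_mx.
rewrite {1}e mulmxDr mulmxDl h2 mul_scalar_mx mul_mx_scalar -scalemxAl in h1.
have := congr1 mxtrace h1; rewrite linearD /= !linearZ /= => key.
rewrite ePP1 ePP1 -/X -/Y !ePP natrX.
have hxy' : x - y != 0 by rewrite subr_eq0.
have hyx : y - x != 0 by rewrite subr_eq0 eq_sym.
have -> : \tr (X *m Y) = (\det (B - y%:M) * \tr X - \det (B - x%:M) * \tr Y) / (x - y).
  by rewrite -key; field.
by field; rewrite hyx hxy'.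
Qed.

Lemma U_facts x : (Ppoly s M).[x] != 0 ->
  [/\ (B - x%:M) \in unitmx, isCl s (Umx s M x) & (Umx s M x)^T = Umx s M x].
Proof.
move=> hx; have u := unit_A hx; split => //; first exact: isCl_inv.
by rewrite /Umx trmx_inv A_sym.
Qed.

Lemma part1 x : (Ppoly s M).[x] != 0 ->
  let U := Umx s M x in
  (forall C, (blk U C)^T = cl s C C *: blk U C) /\ U = clmx s (blk U).
Proof.
move=> hx U; have [u hU hT] := U_facts hx; split; last exact: isClE.
exact: sym_blk.
Qed.

Lemma part3 x : (Ppoly s M).[x] != 0 ->
  let U := Umx s M x in
  LCl s (Pfun s x) M / (Ppoly s M).[x]
  = GammaCl s (Pfun s x) (Pfun s x) M / (Ppoly s M).[x] ^+ 2
    - 2^-1 * (\sum_(A : {set 'I_p}) cl s A A) * \tr (U *m U)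
    - (2 ^+ p / 2) * \sum_(C : {set 'I_p}) cl s C C * Hfun s C * (\tr (blk U C)) ^+ 2.
Proof.
move=> hx U; have [u hU hT] := U_facts hx.
have hsym := sym_blk hU hT.
rewrite /U /Umx in hU hT hsym *.
set V := invmx (B - x%:M) in hU hT hsym *.
set d := (Ppoly s M).[x].
have dE : d = \det (B - x%:M) by rewrite /d ePP.
have d0 : d != 0 by [].
pose S1 := \sum_a \sum_b gam s a b * \tr (V *m clmx s (unitM R a))
                             * \tr (V *m clmx s (unitM R b)).
pose S2 := \sum_a \sum_b gam s a b * \tr (V *m clmx s (unitM R b) *m V *m clmx s (unitM R a)).
have hL : LCl s (Pfun s x) M = d * S1 - d * S2.
  rewrite /LCl /S1 /S2 !mulr_sumr -sumrB; apply: eq_bigr => a _.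
  rewrite !mulr_sumr -sumrB; apply: eq_bigr => b _.
  rewrite d2E // -/V -dE; ring.
have hG : GammaCl s (Pfun s x) (Pfun s x) M = d ^+ 2 * S1.
  rewrite /GammaCl /S1 mulr_sumr; apply: eq_bigr => a _.
  rewrite mulr_sumr; apply: eq_bigr => b _.
  rewrite !d1E adjE // -/V -!scalemxAl !linearZ /= -dE; ring.
have g3 := G3 hsym.
rewrite -(isClE hU) natrX -/S2 in g3.
rewrite hL hG g3.
by field; rewrite d0.
Qed.

Lemma part4 x : (Ppoly s M).[x] != 0 ->
  let U := Umx s M x in
  \tr (U *m U) = (Ppoly s M)^`().[x] ^+ 2 / (Ppoly s M).[x] ^+ 2
                 - (Ppoly s M)^`()^`().[x] / (Ppoly s M).[x].
Proof.
move=> hx U; have [u hU hT] := U_facts hx.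
rewrite /U /Umx.
set V := invmx (B - x%:M).
set d := (Ppoly s M).[x].
have dE : d = \det (B - x%:M) by rewrite /d ePP.
have d0 : d != 0 by [].
set Dm := map_mx (horner_eval x) (map_mx deriv (\adj (map_mx polyC B - 'X%:M))).
have e2 : (Ppoly s M)^`()^`().[x] = - \tr Dm.
  by rewrite /Ppoly Pderiv2 hornerN eval_tr.
have hrel := congr1 (map_mx (horner_eval x)) (adj_deriv_rel B).
rewrite map_mxD map_mxN map_mxM map_mx_adj eval_Ap map_scalar_mx -/Dm in hrel.
have e1 : (Ppoly s M)^`().[x] = - (d * \tr V).
  by rewrite ePP1 adjE // linearZ /= dE.
have hD : Dm = V *m (((Ppoly s M)^`().[x])%:M + \adj (B - x%:M)).
  have hrel' : - \adj (B - x%:M) + (B - x%:M) *m Dm = ((Ppoly s M)^`().[x])%:M := hrel.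
  have hA : (B - x%:M) *m Dm = ((Ppoly s M)^`().[x])%:M + \adj (B - x%:M).
    by rewrite -hrel' [RHS]addrC addNKr.
  by rewrite -hA mulKmx.
rewrite e2 hD mulmxDr mul_mx_scalar adjE // -/V -dE -scalemxAr linearD /= !linearZ /=.
rewrite e1.
by field; rewrite d0.
Qed.

End MainSec.

Unset Implicit Arguments.

Theorem mainTheorem13 (R : realFieldType) (p n : nat)
  (s : 'I_p -> 'I_p -> bool)
  (hs : forall i j : 'I_p, (i < j)%N -> s i j = false)
  (hn : (0 < n)%N)
  (M : {set 'I_p} -> 'M[R]_n)
  (hM : forall C, (M C)^T = cl s C C *: M C) :
  let P := Ppoly s M in
  [/\ (* U(X) is Cl(E)-symmetric *)
      (forall x : R, P.[x] != 0 ->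
         let U := Umx s M x in
         (forall C, (blk U C)^T = cl s C C *: blk U C) /\ U = clmx s (blk U)),
      (* Gamma(P(X), P(Y)) *)
      (forall x y : R, x != y ->
         GammaCl s (Pfun s x) (Pfun s y) M
         = (2 ^+ p) / (y - x) * (P^`().[x] * P.[y] - P^`().[y] * P.[x])),
      (* L(P)/P ; Gamma(log P, log P) = Gamma(P,P)/P^2 *)
      (forall x : R, P.[x] != 0 ->
         let U := Umx s M x in
         LCl s (Pfun s x) M / P.[x]
         = GammaCl s (Pfun s x) (Pfun s x) M / P.[x] ^+ 2
           - 2^-1 * (\sum_(A : {set 'I_p}) cl s A A) * \tr (U *m U)
           - (2 ^+ p / 2) * \sum_(C : {set 'I_p})
                               cl s C C * Hfun s C * (\tr (blk U C)) ^+ 2) &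
      (* trace(U^2) *)
      (forall x : R, P.[x] != 0 ->
         let U := Umx s M x in
         \tr (U *m U) = P^`().[x] ^+ 2 / P.[x] ^+ 2 - P^`()^`().[x] / P.[x])].
Proof.
move=> P; split.
- exact: (part1 hM).
- exact: (part2 hM).
- exact: (part3 hM).
- exact: (part4 hM).
Qed.
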